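(* Let $\mathcal{D}=\{(X_i,B_i):i\in I\}$ be a collection of pairs, each consisting of a random variable $X_i$ on $\Omega$ and a nonempty event $B_i\subseteq\Omega$, equipped with coherent$_1$ conditional previsions $\{P(X_i\mid B_i):i\in I\}$, and suppose $\mathcal{D}$ contains every pair $(c,\Omega)$ with $c$ a real number (the constant random variable $c$). Let $\mathcal{F}$ be any set of random variable/nonempty event pairs with $\mathcal{D}\subseteq\mathcal{F}$. Then there exists an assignment of extended-real conditional previsions $P'(X\mid B)$ for all $(X,B)\in\mathcal{F}$ that agrees with $P$ on $\mathcal{D}$ and is coherent$_1$.
   Context: Let $\Omega$ be a nonempty set of states $\omega$; events are subsets of $\Omega$ and random variables are real-valued functions on $\Omega$. An event $B$ is identified with its indicator function. A conditional prevision $P(X\mid B)$ is an extended real number; $P(X\mid\Omega)$ is called a marginal prevision. Coherence$_1$: a collection $\{P(X_i\mid B_i):i\in I\}$ is coherent$_1$ if for every finite $\{i_1,\dots,i_n\}\subseteq I$, all real $\alpha_1,\dots,\alpha_n$ with $\alpha_j\ge 0$ whenever $P(X_{i_j}\mid B_{i_j})=+\infty$ and $\alpha_j\le 0$ whenever $P(X_{i_j}\mid B_{i_j})=-\infty$, and all real $c_1,\dots,c_n$ with $c_j=P(X_{i_j}\mid B_{i_j})$ whenever that prevision is finite, we have $\sup_\omega \sum_{j=1}^n \alpha_j B_{i_j}(\omega)[X_{i_j}(\omega)-c_j]\ge 0$. *)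

(* Defs.v *)
From mathcomp Require Import all_boot all_order all_algebra.
From mathcomp Require Import all_classical all_reals.
From mathcomp Require Import ereal numfun.
Set Implicit Arguments. Unset Strict Implicit. Unset Printing Implicit Defensive.
Import Order.TTheory GRing.Theory Num.Theory.
Local Open Scope classical_set_scope.
Local Open Scope ring_scope.

Definition rvpair (R : realType) (Omega : Type) := ((Omega -> R) * set Omega)%type.

Definition admissible_term (R : realType) (v : \bar R) (alpha c : R) : Prop :=
  match v with
  | +oo%E => 0 <= alpha
  | -oo%E => alpha <= 0
  | r%:E => c = r
  end.

(* A finite gamble is a list of triples ((X_j, B_j), alpha_j, c_j); its value at w is
   sum_j alpha_j * B_j(w) * (X_j(w) - c_j), with B_j identified with its indicator. *)
Definition gamble (R : realType) (Omega : Type)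
    (s : seq (rvpair R Omega * R * R)) (w : Omega) : R :=
  \sum_(t <- s) t.1.2 * \1_(t.1.1.2) w * (t.1.1.1 w - t.2).

Definition coherent1 (R : realType) (Omega : Type)
    (S : set (rvpair R Omega)) (P : rvpair R Omega -> \bar R) : Prop :=
  forall s : seq (rvpair R Omega * R * R),
    (forall t, t \in s -> S t.1.1 /\ admissible_term (P t.1.1) t.1.2 t.2) ->
    (0 <= ereal_sup (range (fun w => (gamble s w)%:E)))%E.

(* Main.v *)
Require Import Defs.
From mathcomp Require Import all_boot all_order all_algebra.
From mathcomp Require Import all_classical all_reals.
From mathcomp Require Import ereal numfun.
From mathcomp Require Import ring lra.
Set Implicit Arguments. Unset Strict Implicit. Unset Printing Implicit Defensive.
Import Order.TTheory GRing.Theory Num.Theory.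
Local Open Scope classical_set_scope.
Local Open Scope ring_scope.

Definition NS (R : realType) (Omega : Type) (f : Omega -> R) :=
  forall e : R, 0 < e -> exists w, - e < f w.

Definition adm (R : realType) (Omega : Type) (G : set (rvpair R Omega * \bar R))
  (s : seq (rvpair R Omega * R * R)) :=
  forall t, t \in s -> exists v, G (t.1.1, v) /\ admissible_term v t.1.2 t.2.

Definition cohG (R : realType) (Omega : Type) (G : set (rvpair R Omega * \bar R)) :=
  forall s, adm G s -> NS (gamble s).

Definition good (R : realType) (Omega : Type) (G : set (rvpair R Omega * \bar R))
  (p : rvpair R Omega) (a C : R) :=
  forall s, adm G s -> NS (fun w => gamble s w + \1_(p.2) w * (a * p.1 w - C)).

Definition scal (R : realType) (Omega : Type) (k : R) (s : seq (rvpair R Omega * R * R)) :=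
  map (fun t => (t.1.1, k * t.1.2, t.2)) s.

Lemma indic01 (R : realType) (T : Type) (A : set T) (w : T) :
  0 <= (\1_A w : R) <= 1.
Proof. by rewrite indicE; case: (w \in A); rewrite ?ler01 ?lexx. Qed.

Lemma gamble_cat (R : realType) (Omega : Type) s1 s2 (w : Omega) :
  gamble (s1 ++ s2) w = gamble s1 w + gamble s2 w :> R.
Proof. by rewrite /gamble big_cat. Qed.

Lemma gamble_scal (R : realType) (Omega : Type) (k : R) s (w : Omega) :
  gamble (scal k s) w = k * gamble s w.
Proof.
rewrite /gamble big_map mulr_sumr; apply: eq_bigr => t _ /=.
by rewrite -!mulrA.
Qed.

Lemma adm_cat (R : realType) (Omega : Type) (G : set (rvpair R Omega * \bar R)) s1 s2 :
  adm G s1 -> adm G s2 -> adm G (s1 ++ s2).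
Proof. by move=> h1 h2 t; rewrite mem_cat => /orP[/h1|/h2]. Qed.

Lemma adm_scal (R : realType) (Omega : Type) (G : set (rvpair R Omega * \bar R)) k s :
  0 < k -> adm G s -> adm G (scal k s).
Proof.
move=> k0 h t /mapP[u /h [v [Gv av]] ->] /=; exists v; split => //.
move: av; case: v {Gv} => [r| |] //= ?; [exact: mulr_ge0 (ltW k0) _|].
by rewrite pmulr_rle0.
Qed.

Lemma adm_mono (R : realType) (Omega : Type) (G H : set (rvpair R Omega * \bar R)) s :
  G `<=` H -> adm G s -> adm H s.
Proof. by move=> GH h t /h [v [Gv av]]; exists v; split => //; exact: GH. Qed.

Lemma cohG_mono (R : realType) (Omega : Type) (G H : set (rvpair R Omega * \bar R)) :
  G `<=` H -> cohG H -> cohG G.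
Proof. by move=> GH h s /(adm_mono GH) /h. Qed.

Lemma NS_le (R : realType) (Omega : Type) (f g : Omega -> R) :
  (forall w, f w <= g w) -> NS f -> NS g.
Proof.
by move=> fg h e e0; have [w hw] := h e e0; exists w; exact: lt_le_trans (fg w).
Qed.

Lemma NS_scale (R : realType) (Omega : Type) (f : Omega -> R) k :
  0 < k -> NS f -> NS (fun w => k * f w).
Proof.
move=> k0 h e e0; have [w hw] := h (e / k) (divr_gt0 e0 k0); exists w.
by move: hw; rewrite -(ltr_pM2l k0) mulrN mulrCA mulfV ?gt_eqF // mulr1.
Qed.

Lemma good_scale (R : realType) (Omega : Type) (G : set (rvpair R Omega * \bar R)) p a C k :
  0 < k -> good G p a C -> good G p (k * a) (k * C).
Proof.
move=> k0 h s; have ki : 0 < k^-1 by rewrite invr_gt0.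
move=> /(adm_scal ki) /h /(NS_scale k0).
apply: NS_le => w; rewrite gamble_scal mulrDr mulrA mulfV ?gt_eqF // mul1r.
by rewrite mulrCA mulrBr mulrA.
Qed.

Lemma good0 (R : realType) (Omega : Type) (G : set (rvpair R Omega * \bar R)) p :
  cohG G -> good G p 0 0.
Proof. by move=> h s /h; apply: NS_le => w; rewrite mul0r subr0 mulr0 addr0. Qed.

Lemma NS_neg (R : realType) (Omega : Type) (f : Omega -> R) :
  ~ NS f -> exists2 e, 0 < e & forall w, f w <= - e.
Proof.
move=> /existsNP [e] /not_implyP [e0 /forallNP h]; exists e => // w.
by have := h w; rewrite ltNge => /negP; rewrite negbK.
Qed.

Lemma sandwich (R : realType) (Omega : Type) (G : set (rvpair R Omega * \bar R)) p r u :
  cohG G -> ~ good G p 1 r -> ~ good G p (-1) (- u) -> u < r.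
Proof.
move=> hc /existsNP [s1 /not_implyP [a1 /NS_neg [e1 e10 h1]]].
move=> /existsNP [s2 /not_implyP [a2 /NS_neg [e2 e20 h2]]].
rewrite ltNge; apply/negP => ru.
have := hc _ (adm_cat a1 a2) (e1 + e2) (addr_gt0 e10 e20).
case=> w; rewrite gamble_cat; apply/negP; rewrite -leNgt.
have := h1 w; have := h2 w; have := @indic01 R _ p.2 w.
set i := \1_ _ w; move=> /andP [i0 i1] hh1 hh2.
have : 0 <= i * (u - r) by apply: mulr_ge0; lra.
rewrite mulrBr; nra.
Qed.

Definition vcond (R : realType) (v : \bar R) (a C : R) : Prop :=
  match v with
  | r%:E => C = a * r
  | +oo%E => 0 <= a /\ (a = 0 -> C = 0)
  | -oo%E => a <= 0 /\ (a = 0 -> C = 0)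
  end.

Lemma split_step (R : realType) (Omega : Type) (G : set (rvpair R Omega * \bar R))
  (p : rvpair R Omega) (v : \bar R) :
  (forall a C, vcond v a C -> good G p a C) -> cohG (G `|` [set (p, v)]).
Proof.
move=> hg s hs.
pose q t := `[< exists w, G (t.1.1, w) /\ admissible_term w t.1.2 t.2 >].
pose s1 := [seq t <- s | q t]; pose s2 := [seq t <- s | ~~ q t].
have f2 t : t \in s2 -> t.1.1 = p /\ admissible_term v t.1.2 t.2.
  rewrite mem_filter => /andP [nq /hs [w [[Gw|[e1 e2]] aw]]].
    by move: nq => /asboolPn; case; exists w.
  by rewrite e1 -e2.
have a1 : adm G s1.
  by move=> t; rewrite mem_filter => /andP [/asboolP [w hw] _]; exists w.
pose a := \sum_(t <- s2) t.1.2; pose C := \sum_(t <- s2) t.1.2 * t.2.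
have eqg w : gamble s w = gamble s1 w + \1_(p.2) w * (a * p.1 w - C).
  have -> : gamble s w = gamble s1 w + gamble s2 w.
    by rewrite /gamble (bigID q) /= !big_filter.
  congr (_ + _); rewrite /gamble /a /C mulr_suml -sumrB mulr_sumr.
  rewrite [LHS]big_seq [RHS]big_seq; apply: eq_bigr => t /f2 [-> _]; ring.
have vc : vcond v a C.
  clear eqg; case: v hg f2 hs => [r| |] hg f2 hs /=.
  - rewrite /C /a mulr_suml [LHS]big_seq [RHS]big_seq.
    by apply: eq_bigr => t /f2 [_ /= ->].
  - have ge0 : forall t, t \in s2 -> 0 <= t.1.2 by move=> t /f2 [].
    split; first by rewrite /a big_seq sumr_ge0.
    move=> /eqP; rewrite /a big_seq_cond psumr_eq0; last first.
      by move=> t /andP [/ge0].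
    move=> /allP h0; rewrite /C big_seq big1 // => t ts.
    by have := h0 t ts; rewrite ts andbT /= => /eqP ->; rewrite mul0r.
  - have le0 : forall t, t \in s2 -> t.1.2 <= 0 by move=> t /f2 [].
    split; first by rewrite /a big_seq; apply: sumr_le0.
    move=> /eqP; rewrite -oppr_eq0 -sumrN /a big_seq_cond psumr_eq0; last first.
      by move=> t /andP [/le0]; rewrite oppr_ge0.
    move=> /allP h0; rewrite /C big_seq big1 // => t ts.
    have := h0 t ts; rewrite ts andbT /= oppr_eq0 => /eqP ->; by rewrite mul0r.
have := hg _ _ vc s1 a1; apply: NS_le => w; by rewrite eqg.
Qed.

Lemma good_eq (R : realType) (Omega : Type) (G : set (rvpair R Omega * \bar R)) p a C a' C' :
  a = a' -> C = C' -> good G p a C -> good G p a' C'.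
Proof. by move=> -> ->. Qed.

Lemma closure_pt (R : realType) (Omega : Type) (G : set (rvpair R Omega * \bar R)) p :
  cohG G -> ~ (forall r, good G p 1 r) -> ~ (forall r, good G p (-1) (- r)) ->
  exists t, good G p 1 t /\ good G p (-1) (- t).
Proof.
move=> hc /existsNP [r0 nr0] /existsNP [u0 nu0].
pose E := [set r | ~ good G p 1 r].
have lbE : lbound E u0 by move=> r Er; apply/ltW/(sandwich hc Er nu0).
have hlb : has_lbound E by exists u0.
have nE : E !=set0 by exists r0.
exists (inf E); split.
- move=> s hs e e0.
  have hA : good G p 1 (inf E - e / 2).
    apply: contrapT => nA; have := ge_inf hlb nA; lra.
  have [w hw] := hA s hs (e / 2) ltac:(lra); exists w.
  move: hw; have := @indic01 R _ p.2 w; set i := \1_ _ w => /andP [i0 i1].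
  nra.
- move=> s hs e e0.
  have hU : good G p (-1) (- (inf E + e / 2)).
    apply: contrapT => nU.
    have : lbound E (inf E + e / 2).
      by move=> r Er; apply/ltW/(sandwich hc Er nU).
    move=> /(lb_le_inf nE); lra.
  have [w hw] := hU s hs (e / 2) ltac:(lra); exists w.
  move: hw; have := @indic01 R _ p.2 w; set i := \1_ _ w => /andP [i0 i1].
  nra.
Qed.

Lemma one_step (R : realType) (Omega : Type) (G : set (rvpair R Omega * \bar R)) p :
  cohG G -> exists v, cohG (G `|` [set (p, v)]).
Proof.
move=> hc.
have gneg a C (hU : forall r, good G p (-1) (- r)) : a < 0 -> good G p a C.
  move=> a0; apply: (good_eq _ _ (good_scale (k := - a) _ (hU (C / a)))).
  - by rewrite mulrN1 opprK.
  - have an : a != 0 by rewrite lt_eqF.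
    by rewrite mulrN mulNr opprK mulrC divfK.
  - by rewrite oppr_gt0.
have gpos a C (hA : forall r, good G p 1 r) : 0 < a -> good G p a C.
  move=> a0; apply: (good_eq _ _ (good_scale (k := a) _ (hA (C / a)))).
  - by rewrite mulr1.
  - by rewrite mulrC divfK // gt_eqF.
  - done.
have [hU|nU] := pselect (forall r, good G p (-1) (- r)).
  exists -oo%E; apply: split_step => a C /= [a0 aC].
  have [a00|an] := eqVneq a 0; first by rewrite a00 aC //; exact: good0.
  by apply: gneg; rewrite // lt_neqAle an.
have [hA|nA] := pselect (forall r, good G p 1 r).
  exists +oo%E; apply: split_step => a C /= [a0 aC].
  have [a00|an] := eqVneq a 0; first by rewrite a00 aC //; exact: good0.
  by apply: gpos; rewrite // lt_neqAle eq_sym an.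
have [t [ht1 ht2]] := closure_pt hc nA nU.
exists t%:E; apply: split_step => a C /= ->.
have [a0|a0|->] := ltgtP a 0.
- apply: (good_eq _ _ (good_scale (k := - a) _ ht2)).
  + by rewrite mulrN1 opprK.
  + by rewrite mulrN mulNr opprK.
  + by rewrite oppr_gt0.
- apply: (good_eq _ _ (good_scale (k := a) _ ht1)) => //; by rewrite mulr1.
- by rewrite mul0r; exact: good0.
Qed.

Lemma sup_of_NS (R : realType) (Omega : Type) (f : Omega -> R) :
  NS f -> (0 <= ereal_sup (range (fun w => (f w)%:E)))%E.
Proof.
move=> h; set x := ereal_sup _.
have hx e : 0 < e -> ((- e)%:E <= x)%E.
  move=> e0; have [w hw] := h e e0; apply: le_ereal_sup_tmp.
  by exists (f w)%:E; [exists w | rewrite lee_fin ltW].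
case: x hx => [r| |] hx.
- rewrite lee_fin; apply: contrapT => /negP; rewrite -ltNge => r0.
  have := hx (- r / 2) ltac:(lra); rewrite lee_fin; lra.
- exact: leey.
- by have := hx 1 ltr01.
Qed.

Lemma NS_of_sup (R : realType) (Omega : Type) (f : Omega -> R) :
  (0 <= ereal_sup (range (fun w => (f w)%:E)))%E -> NS f.
Proof.
move=> h e e0.
have : ((- e)%:E < ereal_sup (range (fun w => (f w)%:E)))%E.
  by apply: lt_le_trans h; rewrite lte_fin oppr_lt0.
by move=> /ereal_sup_gt [_ [w _ <-]]; rewrite lte_fin => hw; exists w.
Qed.

Definition functional (R : realType) (Omega : Type) (H : set (rvpair R Omega * \bar R)) :=
  forall p v w, H (p, v) -> H (p, w) -> v = w.

Definition goodset (R : realType) (Omega : Type) (F : set (rvpair R Omega))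
  (H : set (rvpair R Omega * \bar R)) :=
  [/\ functional H, (forall q, H q -> F q.1) & cohG H].

Lemma adm_cons (R : realType) (Omega : Type) (H : set (rvpair R Omega * \bar R)) t s :
  adm H (t :: s) <->
  (exists v, H (t.1.1, v) /\ admissible_term v t.1.2 t.2) /\ adm H s.
Proof.
split.
- move=> h; split; first by apply: h; rewrite mem_head.
  by move=> t' ts; apply: h; rewrite in_cons ts orbT.
- move=> [ht hs] t'; rewrite in_cons => /orP [/eqP ->|/hs] //.
Qed.

Lemma chain_good (R : realType) (Omega : Type) (F : set (rvpair R Omega))
  (G0 : set (rvpair R Omega * \bar R)) (Fc : set (set (rvpair R Omega * \bar R))) :
  goodset F G0 -> (forall X, Fc X -> goodset F (X `|` G0)) -> total_on Fc subset ->
  goodset F ((\bigcup_(X in Fc) X) `|` G0).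
Proof.
move=> g0 gX tot.
pose Fam H := H = G0 \/ exists2 X, Fc X & H = X `|` G0.
have famg H : Fam H -> goodset F H by case=> [->|[X FX ->]] //; exact: gX.
have famt H1 H2 : Fam H1 -> Fam H2 -> H1 `<=` H2 \/ H2 `<=` H1.
  case=> [->|[X FX ->]].
    case=> [->|[Y FY ->]]; [by left|left; exact: subsetUr].
  case=> [->|[Y FY ->]]; first by right; exact: subsetUr.
  have [XY|YX] := tot _ _ FX FY; [left|right]; exact: setSU.
have memU q : ((\bigcup_(X in Fc) X) `|` G0) q -> exists2 H, Fam H & H q.
  case=> [[X FX Xq]|G0q]; first by exists (X `|` G0); [right; exists X|left].
  by exists G0; [left|].
split.
- move=> p v w /memU [H1 f1 h1] /memU [H2 f2 h2].
  have [s12|s21] := famt _ _ f1 f2.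
    by have [fn _ _] := famg _ f2; apply: fn (s12 _ h1) h2.
  by have [fn _ _] := famg _ f1; apply: fn h1 (s21 _ h2).
- by move=> q /memU [H fH Hq]; have [_ dm _] := famg _ fH; exact: dm.
- move=> s; suff : adm (\bigcup_(X in Fc) X `|` G0) s -> exists2 H, Fam H & adm H s.
    by move=> hh /hh [H fH aH]; have [_ _ c] := famg _ fH; exact: c.
  elim: s => [_|t s IH /adm_cons [[v [hv av]] /IH [H2 f2 a2]]].
    by exists G0; [left|move=> t].
  have [H1 f1 h1] := memU _ hv.
  have [s12|s21] := famt _ _ f1 f2.
    exists H2 => //; apply/adm_cons; split => //; exists v; split => //; exact: s12.
  exists H1 => //; apply/adm_cons; split; first by exists v.
  exact: adm_mono s21 a2.
Qed.

Theorem theorem7p1 (R : realType) (Omega : Type)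
    (D F : set (rvpair R Omega)) (P : rvpair R Omega -> \bar R) :
  (forall p, D p -> p.2 !=set0) ->
  coherent1 D P ->
  (forall c : R, D (cst c, setT)) ->
  (forall p, F p -> p.2 !=set0) ->
  D `<=` F ->
  exists P' : rvpair R Omega -> \bar R,
    (forall p, D p -> P' p = P p) /\ coherent1 F P'.
Proof.
move=> _ hcoh _ _ DF.
pose G0 := [set q : rvpair R Omega * \bar R | D q.1 /\ q.2 = P q.1].
have g0 : goodset F G0.
  split.
  - by move=> p v w [_ /= ->] [_ /= ->].
  - by move=> q [/DF].
  - move=> s hs; apply: NS_of_sup; apply: hcoh => t /hs [v [[/= Dt ->] av]].
    by split.
have [A [PA maxA]] := @Zorn_bigcup _ (fun X => goodset F (X `|` G0)) (fun Fc FcP tot =>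
   chain_good g0 FcP tot).
pose Dl := A `|` G0.
have [fnD domD cohD] := PA.
have dom p : F p -> exists v, Dl (p, v).
  move=> Fp; apply: contrapT => nv.
  have [v hv] := one_step p cohD.
  apply: (maxA (A `|` [set (p, v)])).
    split; first exact: subsetUl.
    move=> /(_ (p, v) (or_intror erefl)) Apv; apply: nv; exists v; by left.
  have sub : (A `|` [set (p, v)]) `|` G0 `<=` Dl `|` [set (p, v)].
    by move=> q [[Aq|->]|Gq]; [left; left|right|left; right].
  split.
  - move=> p' v1 v2 /sub h1 /sub h2.
    case: h1 h2 => [h1|h1] [h2|h2].
    + exact: fnD h1 h2.
    + by case: h2 => e1 _; exfalso; apply: nv; exists v1; rewrite -e1.
    + by case: h1 => e1 _; exfalso; apply: nv; exists v2; rewrite -e1.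
    + by case: h1 => _ ->; case: h2 => _ ->.
  - by move=> q /sub [/domD|->].
  - exact: cohG_mono sub hv.
exists (fun p => xget 0%E [set v | Dl (p, v)]); split.
- move=> p Dp.
  have h1 : Dl (p, P p) by right.
  exact: (fnD p _ _ (xgetPex 0%E (ex_intro (fun v => Dl (p, v)) _ h1)) h1).
- move=> s hs; apply: sup_of_NS; apply: cohD => t /hs [Ft aT].
  by exists (xget 0%E [set v | Dl (t.1.1, v)]); split => //; exact: xgetPex (dom _ Ft).
Qed.
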